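(* Let $\mathbf{F}$ be a field of characteristic $3$ and let $m,g\in\mathbf{N}_0$ with $B(m,g)\not\equiv0\pmod 3$. For every $u\in\mathbf{N}_0$, the element $(e_{m,g})_{\le u}$ is an idempotent in $S_\mathbf{F}((m+3^{u+1}-1,\,3^{u+1}-1))$.
   Context: For a partition $\lambda=(\lambda_1,\lambda_2)$ with $m=\lambda_1-\lambda_2$, $S_\mathbf{F}(\lambda)=\operatorname{End}_{\mathbf{F}S_r}(M^\lambda)$ ($M^\lambda$ the permutation module on cosets of $S_{\lambda_1}\times S_{\lambda_2}$) is a commutative $\mathbf{F}$-algebra with basis $b(0)=\mathbf{1},b(1),\dots,b(\lambda_2)$ and multiplication $b(i)b(j)=\sum_{h=\max\{i,j\}}^{i+j}\binom{h}{i}\binom{h}{j}\binom{m+i+j}{i+j-h}b(h)$, with the convention $b(a)=0$ for $a>\lambda_2$. $B(m,g)=\binom{m+2g}{g}$. With base-3 digits $(m+2g)_u$, $g_u$, define $I^{(0)}=\{u: g_u=0,(m+2g)_u=0\}$, $J^{(0)}=\{u:g_u=1,(m+2g)_u=2\}$, $I^{(1)}=\{u:g_u=0,(m+2g)_u=1\}$, $J^{(1)}=\{u:g_u=2,(m+2g)_u=2\}$, $I^{(2)}=\{u:g_u=0,(m+2g)_u=2\}$, $J^{(2)}=\{u:g_u=1,(m+2g)_u=1\}$. Define $(e_{m,g})_{\le t}$ as \[\prod_{u\in I^{(0)},u\le t}(\mathbf{1}+b(3^u)-b(2\cdot3^u))\prod_{u\in J^{(0)},u\le t}(b(2\cdot3^u)-b(3^u))\prod_{u\in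 I^{(1)},u\le t}(\mathbf{1}-b(2\cdot3^u))\prod_{u\in J^{(1)},u\le t}b(2\cdot3^u)\prod_{u\in I^{(2)},u\le t}(\mathbf{1}-b(3^u)+b(2\cdot3^u))\prod_{u\in J^{(2)},u\le t}(b(3^u)-b(2\cdot3^u)),\] and $(e_{m,g})_{<t}$ analogously with $u<t$ (so $(e_{m,g})_{<0}=\mathbf{1}$). *)

(* Defs.v *)
From HB Require Import structures.
From mathcomp Require Import all_boot all_order all_algebra.
Set Implicit Arguments. Unset Strict Implicit. Unset Printing Implicit Defensive.
Import GRing.Theory.
Local Open Scope ring_scope.

(* The algebra S_F(lambda), lambda = (lambda1, lambda2), m = lambda1 - lambda2,
   n = lambda2: elements are coefficient vectors w.r.t. the basis
   b(0), ..., b(n), i.e. finite functions 'I_n.+1 -> F. *)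

(* structure constant: b(i) b(j) = \sum_h Scoef m i j h * b(h),
   nonzero only for max(i,j) <= h <= i+j (binomials vanish for h < max(i,j)). *)
Definition Scoef (m i j h : nat) : nat :=
  if (h <= i + j)%N then ('C(h, i) * 'C(h, j) * 'C(m + i + j, i + j - h))%N
  else 0%N.

Definition Smul (F : fieldType) (m n : nat) (x y : {ffun 'I_n.+1 -> F})
  : {ffun 'I_n.+1 -> F} :=
  [ffun h : 'I_n.+1 =>
     \sum_(i < n.+1) \sum_(j < n.+1) x i * y j * (Scoef m i j h)%:R].

(* basis element b(a); b(a) = 0 for a > n (convention of the paper) *)
Definition Sb (F : fieldType) (n a : nat) : {ffun 'I_n.+1 -> F} :=
  [ffun h : 'I_n.+1 => if nat_of_ord h == a then 1 else 0].

Definition digit3 (u x : nat) : nat := ((x %/ 3 ^ u) %% 3)%N.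

Definition efactor (F : fieldType) (m g n u : nat) : {ffun 'I_n.+1 -> F} :=
  let a := digit3 u g in
  let c := digit3 u (m + 2 * g) in
  let b := Sb F n in
  if (a == 0)%N && (c == 0)%N then b 0%N + b (3 ^ u)%N - b (2 * 3 ^ u)%N
  else if (a == 1)%N && (c == 2)%N then b (2 * 3 ^ u)%N - b (3 ^ u)%N
  else if (a == 0)%N && (c == 1)%N then b 0%N - b (2 * 3 ^ u)%N
  else if (a == 2)%N && (c == 2)%N then b (2 * 3 ^ u)%N
  else if (a == 0)%N && (c == 2)%N then b 0%N - b (3 ^ u)%N + b (2 * 3 ^ u)%N
  else if (a == 1)%N && (c == 1)%N then b (3 ^ u)%N - b (2 * 3 ^ u)%N
  else b 0%N.

(* (e_{m,g})_{<= t} = 1 * f(0) * f(1) * ... * f(t), computed in S_F(lambda)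
   with lambda2 = n, lambda1 - lambda2 = m *)
Definition e_le (F : fieldType) (m g n t : nat) : {ffun 'I_n.+1 -> F} :=
  foldl (fun acc v => Smul m acc (efactor F m g n v)) (Sb F n 0%N) (iota 0 t.+1).

(* Main.v *)
Require Import Defs.
From HB Require Import structures.
From mathcomp Require Import all_boot all_order all_algebra.
From mathcomp Require Import zify ring.
Set Implicit Arguments. Unset Strict Implicit. Unset Printing Implicit Defensive.
Import GRing.Theory.
Local Open Scope ring_scope.

Section Char3.
Variable F : fieldType.
Hypothesis charF3 : 3%N \in [pchar F].

Lemma h3 : (3%:R : F) = 0.
Proof. exact: pcharf0 charF3. Qed.

Lemma nat3 (x : nat) : ((3 * x)%N%:R : F) = 0.
Proof. by rewrite natrM h3 mul0r. Qed.

Lemma bin3S (x y : nat) :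
  'C(x + 3, y + 3) = ('C(x, y + 3) + 3 * 'C(x, y + 2) + 3 * 'C(x, y + 1) + 'C(x, y))%N.
Proof.
have E : forall a b, 'C(a.+1, b.+1) = ('C(a, b.+1) + 'C(a, b))%N by [].
rewrite !addn3 !addn2 !addn1 !E.
lia.
Qed.

Lemma bin3_2 x : 'C(x + 3, 2) = ('C(x, 2) + 3 * x + 3)%N.
Proof.
have E : forall a b, 'C(a.+1, b.+1) = ('C(a, b.+1) + 'C(a, b))%N by [].
rewrite addn3 !E !bin1 !bin0; lia.
Qed.

Lemma binx3_small x k0 : (k0 < 3)%N -> ('C(x + 3, k0))%:R = ('C(x, k0))%:R :> F.
Proof.
case: k0 => [|[|[|//]]] _; first by rewrite !bin0.
  by rewrite !bin1 natrD h3 addr0.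
rewrite bin3_2 -addnA.
have -> : (3 * x + 3 = 3 * x.+1)%N by lia.
by rewrite natrD nat3 addr0.
Qed.

Lemma cast3 a b c d : ((a + 3 * b + 3 * c + d)%N%:R : F) = a%:R + d%:R.
Proof.
have -> : (a + 3 * b + 3 * c + d = (a + d) + 3 * (b + c))%N by lia.
by rewrite (@natrD F (a + d)%N) nat3 addr0 natrD.
Qed.

Lemma lucasF N0 k0 N K : (N0 < 3)%N -> (k0 < 3)%N ->
  ('C(N0 + 3 * N, k0 + 3 * K))%:R = ('C(N0, k0))%:R * ('C(N, K))%:R :> F.
Proof.
move=> hN0 hk0; elim: N K => [|N IH] K.
  case: K => [|K]; first by rewrite !muln0 !addn0 bin0 mulr1.
  rewrite muln0 addn0 bin_small; last lia.
  by rewrite bin0n mulr0.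
have -> : (N0 + 3 * N.+1 = (N0 + 3 * N) + 3)%N by lia.
case: K => [|K].
  by rewrite muln0 addn0 binx3_small // -(addn0 k0) -(muln0 3) IH bin0 muln0 addn0.
have -> : (k0 + 3 * K.+1 = (k0 + 3 * K) + 3)%N by lia.
rewrite bin3S.
rewrite cast3.
have -> : ((k0 + 3 * K) + 3 = k0 + 3 * K.+1)%N by lia.
by rewrite !IH binS (natrD _ 'C(N, K.+1)) mulrDr.
Qed.

End Char3.

Definition Cg (N a b : nat) : nat := if (b <= a)%N then 'C(N, a - b) else 0%N.
Definition pE (e : nat) : nat := (e == 1%N).
Definition rE (e : nat) : nat := (e == 2%N).
Definition kd (w z : nat) : nat * nat :=
  if (z <= w)%N then (((w - z) %% 3)%N, if ((w - z) %/ 3 == 0)%N then 0%N else 1%N)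
  else ((3 - (z - w))%N, 2%N).

Lemma kd_lt w z : ((kd w z).1 < 3)%N /\ ((kd w z).2 < 3)%N.
Proof. rewrite /kd; case: (leqP z w) => h /=; last lia. case: ifP => _; lia. Qed.

Section Char3b.
Variable F : fieldType.
Hypothesis charF3 : 3%N \in [pchar F].

Lemma CgF N0 N w z A B : (N0 < 3)%N -> (w <= 5)%N -> (z <= 3)%N ->
  ((Cg (N0 + 3 * N) (w + 3 * A) (z + 3 * B))%:R : F) =
  ('C(N0, (kd w z).1))%:R * (Cg N (A + pE (kd w z).2) (B + rE (kd w z).2))%:R.
Proof.
move=> hN0 hw hz; rewrite /kd /Cg; case: (leqP z w) => hzw /=.
  set k0 := ((w - z) %% 3)%N; set d := ((w - z) %/ 3)%N.
  have Ewz : (w - z = k0 + d * 3)%N by rewrite /k0 /d addnC -divn_eq.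
  have hk0 : (k0 < 3)%N by rewrite ltn_mod.
  have hd : (pE (if d == 0%N then 0%N else 1%N) = d)%N.
    have hd1 : (d <= 1)%N by lia.
    by rewrite /pE; case: (d =P 0%N) => [->|nd] //=; lia.
  have hr : rE (if d == 0%N then 0%N else 1%N) = 0%N by case: (d =P 0%N).
  rewrite hd hr addn0.
  case: leqP => g1; case: leqP => g2; try lia.
    have -> : (w + 3 * A - (z + 3 * B) = k0 + 3 * (A + d - B))%N by lia.
    by rewrite lucasF.
  by rewrite mulr0.
have hp : pE 2 = 0%N by []. have hr : rE 2 = 1%N by [].
rewrite hp hr addn0.
case: leqP => g1; case: leqP => g2; try lia.
  have -> : (w + 3 * A - (z + 3 * B) = (3 - (z - w)) + 3 * (A - (B + 1)))%N by lia.
  by rewrite lucasF //; lia.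
by rewrite mulr0.
Qed.

End Char3b.

Definition ccZ (k d : nat) : int :=
  nth 0 (nth [:: 1; 0; 0] [:: [:: 1; 1; -1]; [:: 0; -1; 1]; [:: 1; 0; -1];
     [:: 0; 0; 1]; [:: 1; -1; 1]; [:: 0; 1; -1]] k) d.

Definition codeOf (a c : nat) : nat :=
  if (a == 0%N) && (c == 0%N) then 0%N
  else if (a == 1%N) && (c == 2%N) then 1%N
  else if (a == 0%N) && (c == 1%N) then 2%N
  else if (a == 2%N) && (c == 2%N) then 3%N
  else if (a == 0%N) && (c == 2%N) then 4%N
  else if (a == 1%N) && (c == 1%N) then 5%N
  else 6%N.

Definition shift (K : nat -> nat) := fun t => K t.+1.

Lemma sum_3 (R : nmodType) (g : nat -> R) :
  \sum_(i0 < 3) g i0 = g 0%N + g 1%N + g 2%N.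
Proof. by rewrite !big_ord_recr big_ord0 /= add0r. Qed.

Lemma sum3 (R : nmodType) N (f : nat -> R) :
  \sum_(0 <= i < 3 * N) f i = \sum_(i0 < 3) \sum_(0 <= I < N) f (i0 + 3 * I)%N.
Proof.
elim: N => [|N IH].
  rewrite muln0 big_geq // ; symmetry; apply: big1 => i _; by rewrite big_geq.
have -> : (3 * N.+1 = (3 * N).+1.+1.+1)%N by lia.
rewrite big_nat_recr // big_nat_recr // big_nat_recr // IH.
rewrite [RHS](eq_bigr (fun i0 : 'I_3 => \sum_(0 <= I < N) f (i0 + 3 * I)%N + f (i0 + 3 * N)%N));
  last by move=> i _; rewrite big_nat_recr.
rewrite big_split /= (sum_3 (fun i0 => f (i0 + 3 * N)%N)) add0n.
have -> : (3 * N).+1 = (1 + 3 * N)%N by lia.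
have -> : (3 * N).+2 = (2 + 3 * N)%N by lia.
by rewrite !addrA.
Qed.

Section Main.
Variable F : fieldType.
Hypothesis charF3 : 3%N \in [pchar F].

Definition ccF (k d : nat) : F := (ccZ k d)%:~R.

Fixpoint P (U : nat) (K : nat -> nat) (h : nat) : F :=
  match U with
  | 0%N => 1
  | U'.+1 => ccF (K 0%N) (h %% 3) * P U' (shift K) (h %/ 3)
  end.

Definition T U K1 K2 m p r h : F :=
  \sum_(0 <= i < 3 ^ U) \sum_(0 <= j < 3 ^ U)
    P U K1 i * P U K2 j * ('C(h, i))%:R * ('C(h, j))%:R *
    (Cg (m + i + j) (i + j + p) (h + r))%:R.

Definition stN m q i0 j0 := ((m %% 3 + q + i0 + j0) %% 3)%N.
Definition stq m q i0 j0 := ((m %% 3 + q + i0 + j0) %/ 3)%N.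
Definition ste h e i0 j0 := (kd (i0 + j0 + pE e) (h %% 3 + rE e)).
Definition coefN m q h e i0 j0 : nat :=
  ('C(h %% 3, i0) * 'C(h %% 3, j0) * 'C(stN m q i0 j0, (ste h e i0 j0).1))%N.

Lemma T_rec U K1 K2 m q e h : (q <= 2)%N -> (e < 3)%N ->
  T U.+1 K1 K2 (m + q) (pE e) (rE e) h =
  \sum_(i0 < 3) \sum_(j0 < 3)
    (ccF (K1 0%N) i0 * ccF (K2 0%N) j0 * (coefN m q h e i0 j0)%:R) *
    T U (shift K1) (shift K2) (m %/ 3 + stq m q i0 j0) (pE (ste h e i0 j0).2)
      (rE (ste h e i0 j0).2) (h %/ 3).
Proof.
move=> hq he.
rewrite /T expnS sum3; apply: eq_bigr => i0 _.
under eq_bigr => I _ do rewrite sum3.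
rewrite exchange_big /=; apply: eq_bigr => j0 _.
rewrite mulr_sumr; apply: eq_bigr => I _.
rewrite mulr_sumr; apply: eq_bigr => J _.
have hi0 : (i0 < 3)%N by []. have hj0 : (j0 < 3)%N by [].
have m1 : ((i0 + 3 * I) %% 3 = i0)%N by lia.
have d1 : ((i0 + 3 * I) %/ 3 = I)%N by lia.
have m2 : ((j0 + 3 * J) %% 3 = j0)%N by lia.
have d2 : ((j0 + 3 * J) %/ 3 = J)%N by lia.
rewrite m1 d1 m2 d2.
set h0 := (h %% 3)%N; set H := (h %/ 3)%N.
have hh : h = (h0 + 3 * H)%N by rewrite /h0 /H; lia.
have hh0 : (h0 < 3)%N by rewrite /h0; lia.
have Cb1 : ('C(h, i0 + 3 * I))%:R = ('C(h0, i0))%:R * ('C(H, I))%:R :> F.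
  by rewrite {1}hh lucasF.
have Cb2 : ('C(h, j0 + 3 * J))%:R = ('C(h0, j0))%:R * ('C(H, J))%:R :> F.
  by rewrite {1}hh lucasF.
rewrite Cb1 Cb2.
have E1 : (m + q + (i0 + 3 * I) + (j0 + 3 * J) =
   stN m q i0 j0 + 3 * (m %/ 3 + stq m q i0 j0 + I + J))%N.
  rewrite /stN /stq; lia.
have E2 : (i0 + 3 * I + (j0 + 3 * J) + pE e = (i0 + j0 + pE e) + 3 * (I + J))%N by lia.
have E3 : (h + rE e = (h0 + rE e) + 3 * H)%N by rewrite {1}hh; lia.
rewrite E1 E2 E3 CgF //; last 3 first.
- by rewrite /stN; lia.
- rewrite /pE; case: (e == 1%N); lia.
- rewrite /rE; case: (e == 2%N); lia.
rewrite /coefN -/h0 /ste -/h0 !natrM.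
set k := kd _ _.
ring.
Qed.


Definition sumZ3 (g : nat -> int) : int := g 0%N + g 1%N + g 2%N.
Definition W (f : nat -> nat -> int) (sq se : nat -> nat -> nat) (a b : nat) : int :=
  sumZ3 (fun i0 => sumZ3 (fun j0 =>
    if (sq i0 j0 == a) && (se i0 j0 == b) then f i0 j0 else 0)).
Definition cong (x y : int) : bool := ((absz (x - y)) %% 3 == 0)%N.

Definition WG k1 k2 m0 q h0 e a b : int :=
  W (fun i0 j0 => ccZ k1 i0 * ccZ k2 j0 * (coefN m0 q h0 e i0 j0)%:Z)
    (stq m0 q) (fun i0 j0 => (ste h0 e i0 j0).2) a b.

Definition chkM (V : nat -> nat -> int) (g' : nat) (c : int) : bool :=
  let a := (if g' == 0%N then V 0%N 0%N else V 1%N 0%N) in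
  let b := (if g' == 0%N then V 1%N 0%N else 0) in
  [&& cong (V 0%N 0%N) (if g' == 0%N then a else 0), cong (V 0%N 1%N) 0,
      cong (V 0%N 2%N) (- b), cong (V 1%N 0%N) (if g' == 0%N then b else a),
      cong (V 1%N 1%N) 0, cong (V 1%N 2%N) 0, cong (V 2%N 0%N) 0,
      cong (V 2%N 1%N) 0, cong (V 2%N 2%N) 0 & cong (a + b) c].

Definition chkF (V : nat -> nat -> int) (c : int) : bool :=
  [&& cong (V 0%N 1%N) 0, cong (V 1%N 1%N) 0, cong (V 2%N 1%N) 0 &
      cong (V 0%N 0%N + V 1%N 0%N + V 2%N 0%N) c].

Definition checkMain : bool :=
  all (fun m0 => all (fun g0 => all (fun h0 =>
    (g0 <= (m0 + 2 * g0) %% 3)%N ==>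
    (let k := codeOf g0 ((m0 + 2 * g0) %% 3) in
     let g' := ((m0 + 2 * g0) %/ 3)%N in
     chkM (WG k k m0 0 h0 0) g' (ccZ k h0) &&
     chkM (fun a b => WG k k m0 1 h0 0 a b - WG k k m0 0 h0 2 a b) g' (ccZ k h0)))
  (iota 0 3)) (iota 0 3)) (iota 0 3).

Definition checkFold : bool :=
  all (fun k1 => all (fun k2 => all (fun k3 => all (fun m0 => all (fun h0 =>
    ((k1 == 6%N) && (k3 == k2)) || ((k2 == 6%N) && (k3 == k1)) ==>
    chkF (WG k1 k2 m0 0 h0 0) (ccZ k3 h0) && chkF (WG k1 k2 m0 0 h0 2) 0)
  (iota 0 3)) (iota 0 3)) (iota 0 7)) (iota 0 7)) (iota 0 7).
Lemma checkMain_ok : checkMain. Proof. by vm_compute. Qed.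
Lemma checkFold_ok : checkFold. Proof. by vm_compute. Qed.



Lemma congF x y : cong x y -> (x%:~R : F) = y%:~R.
Proof.
rewrite /cong => /eqP hm; apply/eqP; rewrite -subr_eq0 -intrB.
move: hm; case: (x - y) => n /= hm.
  by rewrite -(dvdn_pcharf charF3); apply/dvdnP; exists (n %/ 3)%N; lia.
rewrite NegzE intrN oppr_eq0 -(dvdn_pcharf charF3); apply/dvdnP.
by exists (n.+1 %/ 3)%N; lia.
Qed.

Lemma sumZ3E (g : nat -> int) : ((sumZ3 g)%:~R : F) = \sum_(i < 3) (g i)%:~R.
Proof. by rewrite !big_ord_recr big_ord0 /= add0r /sumZ3 !intrD. Qed.

Lemma pick3 (x y : nat) (Z : nat -> nat -> F) (c : int) :
  (x < 3)%N -> (y < 3)%N ->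
  \sum_(a < 3) \sum_(b < 3)
     ((if (x == a) && (y == b) then c else 0)%:~R * Z a b) = c%:~R * Z x y.
Proof.
move=> hx hy; rewrite !big_ord_recr !big_ord0 /= !add0r.
by case: x hx => [|[|[|//]]] _; case: y hy => [|[|[|//]]] _ /=;
  rewrite ?mul0r ?add0r ?addr0.
Qed.

Lemma group (f : nat -> nat -> int) (sq se : nat -> nat -> nat) (Y : nat -> nat -> F) :
  (forall i j, (i < 3)%N -> (j < 3)%N -> (sq i j < 3)%N /\ (se i j < 3)%N) ->
  \sum_(i0 < 3) \sum_(j0 < 3) (f i0 j0)%:~R * Y (sq i0 j0) (se i0 j0) =
  \sum_(a < 3) \sum_(b < 3) (W f sq se a b)%:~R * Y a b.
Proof.
move=> hs.
transitivity (\sum_(i0 < 3) \sum_(j0 < 3) \sum_(a < 3) \sum_(b < 3)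
   ((if (sq i0 j0 == a) && (se i0 j0 == b) then f i0 j0 else 0)%:~R * Y a b)).
  apply: eq_bigr => i _; apply: eq_bigr => j _.
  by case: (hs i j (ltn_ord i) (ltn_ord j)) => h1 h2; rewrite pick3.
have WE : forall a b, ((W f sq se a b)%:~R : F) = \sum_(i0 < 3) \sum_(j0 < 3)
    (if (sq i0 j0 == a) && (se i0 j0 == b) then f i0 j0 else 0)%:~R.
  move=> a b; rewrite /W sumZ3E; apply: eq_bigr => i _; by rewrite sumZ3E.
have WE2 : forall a b, ((W f sq se a b)%:~R : F) * Y a b = \sum_(i0 < 3) \sum_(j0 < 3)
    ((if (sq i0 j0 == a) && (se i0 j0 == b) then f i0 j0 else 0)%:~R * Y a b).
  move=> a b; rewrite WE mulr_suml; apply: eq_bigr => i _; by rewrite mulr_suml.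
under [RHS]eq_bigr => a _ do under eq_bigr => b _ do rewrite WE2.
under [RHS]eq_bigr => a _ do rewrite exchange_big.
under [RHS]eq_bigr => a _ do under eq_bigr => i _ do rewrite exchange_big.
rewrite [RHS]exchange_big; apply: eq_bigr => i _.
by rewrite [RHS]exchange_big.
Qed.


Lemma closeM (V : nat -> nat -> int) (g' : nat) (c : int) (Y : nat -> nat -> F) (y : F) :
  chkM V g' c -> (g' <= 1)%N ->
  (g' = 0%N -> Y 0%N 0%N = y /\ Y 1%N 0%N - Y 0%N 2%N = y) ->
  (g' = 1%N -> Y 1%N 0%N = y) ->
  \sum_(a < 3) \sum_(b < 3) (V a b)%:~R * Y a b = c%:~R * y.
Proof.
rewrite /chkM => /andP[c00 /andP[c01 /andP[c02 /andP[c10 /andP[c11 /andP[c12 /andP[c20 /andP[c21 /andP[c22 cab]]]]]]]]] hg h0 h1.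
rewrite !big_ord_recr !big_ord0 /= !add0r.
rewrite (congF c00) (congF c01) (congF c02) (congF c10) (congF c11) (congF c12)
  (congF c20) (congF c21) (congF c22) -(congF cab).
case: g' hg h0 h1 {c00 c01 c02 c10 c11 c12 c20 c21 c22 cab} => [|[|//]] _ h0 h1 /=.
  case: (h0 erefl) => e1 e2.
  have e3 : Y 1%N 0%N = y + Y 0%N 2%N by rewrite -e2 subrK.
  rewrite e1 e3 !intrD !intrN; ring.
rewrite (h1 erefl) !intrD !intrN; ring.
Qed.

Lemma closeF (V : nat -> nat -> int) (c : int) (Y : nat -> nat -> F) (y : F) :
  chkF V c -> (forall a, (a < 3)%N -> Y a 0%N = y) -> (forall a, (a < 3)%N -> Y a 2%N = 0) ->
  \sum_(a < 3) \sum_(b < 3) (V a b)%:~R * Y a b = c%:~R * y.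
Proof.
rewrite /chkF => /and4P[c01 c11 c21 cs] h0 h2.
rewrite !big_ord_recr !big_ord0 /= !add0r.
rewrite (congF c01) (congF c11) (congF c21) -(congF cs) !h0 // !h2 // !intrD; ring.
Qed.



Lemma T_step U K1 K2 m q e h : (q <= 2)%N -> (e < 3)%N ->
  T U.+1 K1 K2 (m + q) (pE e) (rE e) h =
  \sum_(a < 3) \sum_(b < 3) ((WG (K1 0%N) (K2 0%N) (m %% 3) q (h %% 3) e a b)%:~R : F) *
    T U (shift K1) (shift K2) (m %/ 3 + a) (pE b) (rE b) (h %/ 3).
Proof.
move=> hq he; rewrite T_rec //.
have hm : (m %% 3 < 3)%N by rewrite ltn_mod.
rewrite -(@group (fun i0 j0 => ccZ (K1 0%N) i0 * ccZ (K2 0%N) j0 * (coefN (m %% 3) q (h %% 3) e i0 j0)%:Z)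
  (stq (m %% 3) q) (fun i0 j0 => (ste (h %% 3) e i0 j0).2)
  (fun a b => T U (shift K1) (shift K2) (m %/ 3 + a) (pE b) (rE b) (h %/ 3))); last first.
  move=> i j hi hj; split; last by case: (kd_lt (i + j + pE e) (h %% 3 %% 3 + rE e)).
  rewrite /stq; lia.
apply: eq_bigr => i0 _; apply: eq_bigr => j0 _.
have E1 : stq (m %% 3) q i0 j0 = stq m q i0 j0 by rewrite /stq modn_mod.
have E2 : ste (h %% 3) e i0 j0 = ste h e i0 j0 by rewrite /ste modn_mod.
have E3 : coefN (m %% 3) q (h %% 3) e i0 j0 = coefN m q h e i0 j0.
  by rewrite /coefN /stN /ste !modn_mod.
by rewrite E1 E2 E3 !intrM.
Qed.


Definition datK (m g : nat) (t : nat) : nat := codeOf (digit3 t g) (digit3 t (m + 2 * g)).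

Lemma P_ext U K K' h : (forall t, (t < U)%N -> K t = K' t) -> P U K h = P U K' h.
Proof.
elim: U K K' h => [//|U IH] K K' h hK /=.
rewrite hK //; congr (_ * _); apply: IH => t ht; apply: hK; lia.
Qed.

Lemma T_ext U K1 K1' K2 K2' m p r h :
  (forall t, (t < U)%N -> K1 t = K1' t) -> (forall t, (t < U)%N -> K2 t = K2' t) ->
  T U K1 K2 m p r h = T U K1' K2' m p r h.
Proof.
move=> h1 h2; rewrite /T; apply: eq_bigr => i _; apply: eq_bigr => j _.
by rewrite (P_ext i h1) (P_ext j h2).
Qed.

Lemma digit3S t x : digit3 t.+1 x = digit3 t (x %/ 3).
Proof. by rewrite /digit3 expnS divnMA. Qed.

Lemma digit30 x : digit3 0 x = (x %% 3)%N.
Proof. by rewrite /digit3 expn0 divn1. Qed.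

Lemma shift_dat m g t :
  shift (datK m g) t = datK (m %/ 3 + (m %% 3 + 2 * (g %% 3)) %/ 3) (g %/ 3) t.
Proof.
rewrite /shift /datK !digit3S; congr (codeOf _ (digit3 _ _)); lia.
Qed.

Lemma dat0 m g : datK m g 0%N = codeOf (g %% 3) ((m %% 3 + 2 * (g %% 3)) %% 3).
Proof. rewrite /datK !digit30; congr codeOf; lia. Qed.

Definition valid (m g : nat) : bool := ('C(m + 2 * g, g))%:R != 0 :> F.

Lemma valid_step m g : valid m g ->
  (g %% 3 <= (m %% 3 + 2 * (g %% 3)) %% 3)%N /\
  valid (m %/ 3 + (m %% 3 + 2 * (g %% 3)) %/ 3) (g %/ 3).
Proof.
rewrite /valid.
set a0 := ((m %% 3 + 2 * (g %% 3)) %% 3)%N.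
set A := (m %/ 3 + (m %% 3 + 2 * (g %% 3)) %/ 3 + 2 * (g %/ 3))%N.
have E1 : (m + 2 * g = a0 + 3 * A)%N by rewrite /a0 /A; lia.
have E2 : (g = g %% 3 + 3 * (g %/ 3))%N by lia.
rewrite E1.
have -> : 'C(a0 + 3 * A, g) = 'C(a0 + 3 * A, g %% 3 + 3 * (g %/ 3)) by rewrite -E2.
rewrite (lucasF charF3); last 2 first.
- by rewrite /a0; lia.
- lia.
rewrite mulf_eq0 negb_or => /andP[h1 h2]; split.
  move: h1; case: (leqP (g %% 3) a0) => // hlt.
  by rewrite bin_small // eqxx.
by rewrite -/A.
Qed.

Lemma checkMain_at m0 g0 h0 : (m0 < 3)%N -> (g0 < 3)%N -> (h0 < 3)%N ->
  (g0 <= (m0 + 2 * g0) %% 3)%N ->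
  chkM (WG (codeOf g0 ((m0 + 2 * g0) %% 3)) (codeOf g0 ((m0 + 2 * g0) %% 3)) m0 0 h0 0)
    ((m0 + 2 * g0) %/ 3) (ccZ (codeOf g0 ((m0 + 2 * g0) %% 3)) h0) &&
  chkM (fun a b => WG (codeOf g0 ((m0 + 2 * g0) %% 3)) (codeOf g0 ((m0 + 2 * g0) %% 3)) m0 1 h0 0 a b
     - WG (codeOf g0 ((m0 + 2 * g0) %% 3)) (codeOf g0 ((m0 + 2 * g0) %% 3)) m0 0 h0 2 a b)
    ((m0 + 2 * g0) %/ 3) (ccZ (codeOf g0 ((m0 + 2 * g0) %% 3)) h0).
Proof.
move=> h1 h2 h3 hd; move: checkMain_ok; rewrite /checkMain.
move=> /allP /(_ m0); rewrite mem_iota => /(_ h1) /allP /(_ g0); rewrite mem_iota => /(_ h2).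
by move=> /allP /(_ h0); rewrite mem_iota => /(_ h3); rewrite hd.
Qed.

Lemma MI U : forall m g h, valid m g -> (h < 3 ^ U)%N ->
  T U (datK m g) (datK m g) (m + 0) (pE 0) (rE 0) h = P U (datK m g) h /\
  T U (datK m g) (datK m g) (m + 1) (pE 0) (rE 0) h -
  T U (datK m g) (datK m g) (m + 0) (pE 2) (rE 2) h = P U (datK m g) h.
Proof.
elim: U => [|U IH] m g h hv hh.
  have -> : h = 0%N by move: hh; rewrite expn0; lia.
  rewrite /T expn0 !big_nat1 /= /Cg /= !addn0 !bin0 !mulr1 /=.
  by rewrite mulr0 subr0.
set m0 := (m %% 3)%N; set g0 := (g %% 3)%N; set gg := ((m0 + 2 * g0) %/ 3)%N.
set M := (m %/ 3)%N; set G := (g %/ 3)%N; set H := (h %/ 3)%N; set h0 := (h %% 3)%N.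
set K := datK m g; set K' := datK (M + gg) G.
have [hd hv'] := valid_step hv.
have hgg : (gg <= 1)%N by rewrite /gg; move: hd; rewrite -/m0 -/g0; lia.
have hH : (H < 3 ^ U)%N by rewrite /H ltn_divLR // mulnC -expnS.
have [IH1 IH2] := IH (M + gg)%N G H hv' hH.
have sh : forall t, (t < U)%N -> shift K t = K' t by move=> t _; rewrite /K /K' shift_dat.
have PK : P U.+1 K h = ccF (codeOf g0 ((m0 + 2 * g0) %% 3)) h0 * P U K' H.
  by rewrite /= (P_ext _ sh) /K dat0.
have chk := checkMain_at (m0 := m0) (g0 := g0) (h0 := h0).
rewrite !T_step // PK.
under eq_bigr => a _ do under eq_bigr => b _ do rewrite (@T_ext U (shift K) K' (shift K) K' _ _ _ _ sh sh).
have k0E : K 0%N = codeOf g0 ((m0 + 2 * g0) %% 3) by rewrite /K dat0.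
rewrite k0E.
have hm0 : (m0 < 3)%N by rewrite /m0 ltn_mod.
have hg0 : (g0 < 3)%N by rewrite /g0 ltn_mod.
have hh0 : (h0 < 3)%N by rewrite /h0 ltn_mod.
have [c1 c2] := andP (chk hm0 hg0 hh0 hd).
split.
  apply: (closeM (Y := fun a b => T U K' K' (M + a) (pE b) (rE b) H) c1 hgg).
  - move=> e; have -> : (M + 0 = M + gg + 0)%N by rewrite /gg; lia.
    have -> : (M + 1 = M + gg + 1)%N by rewrite /gg; lia.
    by split.
  - move=> e; have -> : (M + 1 = M + gg + 0)%N by rewrite /gg; lia.
    by [].
rewrite -sumrB; under eq_bigr => a _ do rewrite -sumrB; under eq_bigr => a _ do
  under eq_bigr => b _ do rewrite -mulrBl -intrB.
under eq_bigr => a _ do under eq_bigr => b _ do rewrite (@T_ext U (shift K) K' (shift K) K' _ _ _ _ sh sh).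
apply: (closeM (Y := fun a b => T U K' K' (M + a) (pE b) (rE b) H) c2 hgg).
- move=> e; have -> : (M + 0 = M + gg + 0)%N by rewrite /gg; lia.
  have -> : (M + 1 = M + gg + 1)%N by rewrite /gg; lia.
  by split.
- move=> e; have -> : (M + 1 = M + gg + 0)%N by rewrite /gg; lia.
  by [].
Qed.

Definition compat (K1 K2 K3 : nat -> nat) : Prop := forall t,
  (K1 t < 7)%N /\ (K2 t < 7)%N /\
  ((K1 t == 6%N) && (K3 t == K2 t) || (K2 t == 6%N) && (K3 t == K1 t)).

Lemma checkFold_at k1 k2 k3 m0 h0 : (k1 < 7)%N -> (k2 < 7)%N -> (k3 < 7)%N ->
  (m0 < 3)%N -> (h0 < 3)%N ->
  ((k1 == 6%N) && (k3 == k2)) || ((k2 == 6%N) && (k3 == k1)) ->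
  chkF (WG k1 k2 m0 0 h0 0) (ccZ k3 h0) && chkF (WG k1 k2 m0 0 h0 2) 0.
Proof.
move=> h1 h2 h3 h4 h5 hc; move: checkFold_ok; rewrite /checkFold.
move=> /allP /(_ k1); rewrite mem_iota => /(_ h1) /allP /(_ k2); rewrite mem_iota => /(_ h2).
move=> /allP /(_ k3); rewrite mem_iota => /(_ h3) /allP /(_ m0); rewrite mem_iota => /(_ h4).
by move=> /allP /(_ h0); rewrite mem_iota => /(_ h5); rewrite hc.
Qed.

Lemma FI U : forall K1 K2 K3, compat K1 K2 K3 -> forall m h, (h < 3 ^ U)%N ->
  T U K1 K2 (m + 0) (pE 0) (rE 0) h = P U K3 h /\
  T U K1 K2 (m + 0) (pE 2) (rE 2) h = 0.
Proof.
elim: U => [|U IH] K1 K2 K3 hc m h hh.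
  have -> : h = 0%N by move: hh; rewrite expn0; lia.
  by rewrite /T expn0 !big_nat1 /= /Cg /= !addn0 !bin0 !mulr1 /= mulr0.
have hc' : compat (shift K1) (shift K2) (shift K3) by move=> t; apply: hc.
set h0 := (h %% 3)%N; set H := (h %/ 3)%N; set M := (m %/ 3)%N.
have hH : (H < 3 ^ U)%N by rewrite /H ltn_divLR // mulnC -expnS.
have hm0 : (m %% 3 < 3)%N by rewrite ltn_mod.
have hh0 : (h0 < 3)%N by rewrite /h0 ltn_mod.
have [k1 [k2 kc]] := hc 0%N.
have k3 : (K3 0%N < 7)%N by case/orP: kc => /andP[_ /eqP ->].
have [c1 c2] := andP (checkFold_at k1 k2 k3 hm0 hh0 kc).
have IHa : forall a, T U (shift K1) (shift K2) (M + a) (pE 0) (rE 0) H = P U (shift K3) H.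
  by move=> a; rewrite -[(M + a)%N]addn0; case: (IH _ _ _ hc' (M + a)%N H hH).
have IHb : forall a, T U (shift K1) (shift K2) (M + a) (pE 2) (rE 2) H = 0.
  by move=> a; rewrite -[(M + a)%N]addn0; case: (IH _ _ _ hc' (M + a)%N H hH).
rewrite !T_step //; split.
  apply: (closeF (Y := fun a b => T U (shift K1) (shift K2) (M + a) (pE b) (rE b) H) c1).
  - by move=> a _; apply: IHa.
  - by move=> a _; apply: IHb.
rewrite (closeF (Y := fun a b => T U (shift K1) (shift K2) (M + a) (pE b) (rE b) H)
   (y := P U (shift K3) H) c2) ?mul0r //.
Qed.

Lemma codeOf_lt a c : (codeOf a c < 7)%N.
Proof. by rewrite /codeOf; repeat case: ifP => _. Qed.

Lemma ccF6 d : (d < 3)%N -> ccF 6 d = (d == 0%N)%:R.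
Proof. by case: d => [|[|[|]]]. Qed.

Lemma P6 U h : (h < 3 ^ U)%N -> P U (fun _ => 6%N) h = (h == 0%N)%:R.
Proof.
elim: U h => [|U IH] h hh.
  by have -> : h = 0%N by move: hh; rewrite expn0; lia.
rewrite /= ccF6 ?ltn_mod // IH; last by rewrite ltn_divLR // mulnC -expnS.
have E : ((h %% 3 == 0) && (h %/ 3 == 0))%N = (h == 0%N).
  apply/idP/idP; last by move=> /eqP ->.
  by move=> /andP[/eqP h1 /eqP h2]; apply/eqP; lia.
by rewrite -natrM mulnb E.
Qed.

Lemma Pef U k kap h : (k < U)%N -> (h < 3 ^ U)%N ->
  P U (fun s => if s == k then kap else 6%N) h =
  ccF kap 0 * (h == 0)%N%:R + ccF kap 1 * (h == 3 ^ k)%N%:R + ccF kap 2 * (h == 2 * 3 ^ k)%N%:R.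
Proof.
elim: U k h => [//|U IH] k h hk hh.
have hH : (h %/ 3 < 3 ^ U)%N by rewrite ltn_divLR // mulnC -expnS.
case: k hk => [|k] hk /=.
  rewrite (@P_ext U _ (fun _ => 6%N)); last by move=> t _.
  rewrite P6 // expn0 muln1.
  have hh0 : (h %% 3 < 3)%N by rewrite ltn_mod.
  case: ((h %/ 3)%N =P 0%N) => [e|ne].
    have -> : h = (h %% 3)%N by lia.
    rewrite modn_mod.
    by case: (h %% 3)%N hh0 => [|[|[|//]]] _ /=; rewrite ?mulr0 ?mulr1 ?addr0 ?add0r.
  have ? : (3 <= h)%N by lia.
  have -> : (h == 0)%N = false by apply/eqP; lia.
  have -> : (h == 1)%N = false by apply/eqP; lia.
  have -> : (h == 2 * 1)%N = false by apply/eqP; lia.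
  by rewrite !mulr0 !addr0.
rewrite ccF6 ?ltn_mod //.
rewrite (@P_ext U _ (fun s => if s == k then kap else 6%N)); last by move=> t _.
have hk' : (k < U)%N by lia.
rewrite IH //.
have E0 : (h == 0%N) = ((h %% 3 == 0) && (h %/ 3 == 0))%N.
  by apply/idP/idP; [move=> /eqP ->|move=> /andP[/eqP ? /eqP ?]; apply/eqP; lia].
have E1 : (h == 3 ^ k.+1)%N = ((h %% 3 == 0) && (h %/ 3 == 3 ^ k))%N.
  rewrite expnS; apply/idP/idP; [move=> /eqP ->|move=> /andP[/eqP ? /eqP ?]; apply/eqP].
    by apply/andP; split; apply/eqP; lia.
  lia.
have E2 : (h == 2 * 3 ^ k.+1)%N = ((h %% 3 == 0) && (h %/ 3 == 2 * 3 ^ k))%N.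
  rewrite expnS mulnCA; apply/idP/idP; [move=> /eqP ->|move=> /andP[/eqP ? /eqP ?]; apply/eqP].
    by apply/andP; split; apply/eqP; lia.
  lia.
rewrite E0 E1 E2 -!mulnb !natrM; ring.
Qed.


Lemma efactorE m g n k (h : 'I_n.+1) :
  efactor F m g n k h =
  ccF (datK m g k) 0 * (val h == 0)%N%:R + ccF (datK m g k) 1 * (val h == 3 ^ k)%N%:R +
  ccF (datK m g k) 2 * (val h == 2 * 3 ^ k)%N%:R.
Proof.
have SbE : forall a, Sb F n a h = (val h == a)%N%:R by move=> a; rewrite /Sb ffunE; case: eqP.
rewrite /efactor /datK /codeOf.
have ifb : forall b : bool, (if b then 1 else 0 : F) = b%:R by case.
by repeat case: ifP => _; rewrite !ffunE ?ifb /ccF /ccZ /=; ring.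
Qed.


Definition Pf n U K : {ffun 'I_n.+1 -> F} := [ffun h => P U K (val h)].

Lemma Smul_T n U m K1 K2 : n.+1 = (3 ^ U)%N ->
  Smul m (Pf n U K1) (Pf n U K2) =
  [ffun h : 'I_n.+1 => T U K1 K2 (m + 0) (pE 0) (rE 0) (val h)].
Proof.
move=> hn; apply/ffunP => h; rewrite !ffunE /T -hn big_mkord.
apply: eq_bigr => i _; rewrite big_mkord; apply: eq_bigr => j _.
rewrite !ffunE /Scoef /Cg /pE /rE /= !addn0.
by case: ifP => _; [rewrite !natrM; ring | rewrite !mulr0].
Qed.

Lemma Sb0 n U : n.+1 = (3 ^ U)%N -> Sb F n 0 = Pf n U (fun _ => 6%N).
Proof.
move=> hn; apply/ffunP => h.
have hh : (val h < 3 ^ U)%N by rewrite -hn; apply: ltn_ord.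
rewrite !ffunE P6 //.
by case: eqP.
Qed.

Lemma efactorP m g n U k : n.+1 = (3 ^ U)%N -> (k < U)%N ->
  efactor F m g n k = Pf n U (fun s => if s == k then datK m g k else 6%N).
Proof.
move=> hn hk; apply/ffunP => h; rewrite efactorE ffunE Pef //.
by rewrite -hn; apply: ltn_ord.
Qed.

Definition acc m g k := fun s => if (s < k)%N then datK m g s else 6%N.

Lemma FOLD m g n U k : n.+1 = (3 ^ U)%N -> (k <= U)%N ->
  foldl (fun acc v => Smul m acc (efactor F m g n v)) (Sb F n 0%N) (iota 0 k) =
  Pf n U (acc m g k).
Proof.
move=> hn; elim: k => [|k IH] hk.
  rewrite /= (Sb0 hn); apply/ffunP => h; rewrite !ffunE; apply: P_ext => t _.
  by rewrite /acc.
have -> : iota 0 k.+1 = iota 0 k ++ [:: k] by rewrite -addn1 iotaD.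
rewrite foldl_cat IH; last lia.
rewrite /= (efactorP _ _ hn); last lia.
rewrite Smul_T //; apply/ffunP => h; rewrite !ffunE.
have hh : (val h < 3 ^ U)%N by rewrite -hn; apply: ltn_ord.
have hc : compat (acc m g k) (fun s => if s == k then datK m g k else 6%N) (acc m g k.+1).
  move=> t; rewrite /acc /datK.
  split; first by case: ifP => _; rewrite ?codeOf_lt.
  split; first by case: ifP => _; rewrite ?codeOf_lt.
  case: (ltngtP t k) => [lt|gt|->].
  - by rewrite ltnS (ltnW lt) /= eqxx orbT.
  - by rewrite ltnS leqNgt gt.
  - by rewrite ?ltnn ?eqxx ltnSn /= ?eqxx.
by case: (FI hc m hh).
Qed.

End Main.

Unset Implicit Arguments.
Theorem proposition5p1 (F : fieldType) (charF3 : 3%N \in [pchar F])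
  (m g : nat) (hB : ('C(m + 2 * g, g) %% 3 != 0)%N) (u : nat) :
  let n := (3 ^ u.+1).-1%N in
  Smul m (e_le F m g n u) (e_le F m g n u) = e_le F m g n u.
Proof.
move=> n.
have hn : n.+1 = (3 ^ u.+1)%N by rewrite /n prednK // expn_gt0.
have He : e_le F m g n u = Pf F n u.+1 (acc m g u.+1).
  by rewrite /e_le (FOLD charF3 m g hn (leqnn _)).
rewrite He (Smul_T F m _ _ hn); apply/ffunP => h; rewrite !ffunE.
have hh : (val h < 3 ^ u.+1)%N by rewrite -hn; apply: ltn_ord.
have hv : valid F m g by rewrite /valid -(dvdn_pcharf charF3) /dvdn.
have ag : forall t, (t < u.+1)%N -> acc m g u.+1 t = datK m g t by move=> t ht; rewrite /acc ht.
rewrite (T_ext charF3 _ _ _ _ ag ag).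
case: (MI charF3 hv hh) => -> _.
by apply: (P_ext charF3) => t ht; rewrite ag.
Qed.
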